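(* Let $(R,v)$ be a discrete valuation domain and let $f=a_0+a_1x+\cdots+a_nx^n\in R[x]$ with $n\ge 2$ and $a_0a_n\neq 0$. Suppose there is an index $s\in\{0,1,\ldots,n-1\}$ such that: (a) $m_i(f)<m_s(f)$ for all $i\in\{0,1,\ldots,n-1\}$ with $i\neq s$; (b) the integer $d=\gcd\bigl(v(a_s)-v(a_n),\,n-s\bigr)$ satisfies $d=n(n-s)\bigl(m_s(f)-m_0(f)\bigr)$ if $s\neq 0$, and $d=1$ if $s=0$. Then either $f$ is irreducible in $R[x]$, or $f$ has a factor in $R[x]$ whose degree is zero or a multiple of $(n-s)/d$. Precisely: whenever $f=f_1f_2$ with $f_1,f_2\in R[x]$, the integer $(n-s)/d$ divides $\deg f_1$ or $\deg f_2$.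
   Context: $(R,v)$ is a discrete valuation domain with (discrete) valuation $v$, extended by $v(0)=+\infty$. For a polynomial $f=a_0+a_1x+\cdots+a_nx^n\in R[x]$ of degree $n$ (so $a_n\ne 0$) and $i\in\{0,\ldots,n-1\}$, define $m_i(f)=\dfrac{v(a_n)-v(a_i)}{n-i}$ (the slope of the segment joining $(i,v(a_i))$ and $(n,v(a_n))$; it equals $-\infty$ if $a_i=0$). *)

(* Defs.v *)
From HB Require Import structures.
From mathcomp Require Import all_boot all_order all_algebra.
Set Implicit Arguments. Unset Strict Implicit. Unset Printing Implicit Defensive.
Import Order.TTheory GRing.Theory Num.Theory.
Local Open Scope ring_scope.

(* A discrete valuation domain (R, v): R is an integral domain and
   v : R -> nat is a (normalized) discrete valuation on the nonzero elements
   (the value v 0 is irrelevant; it plays the role of +oo and is never used),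
   such that R is exactly the valuation ring: v b <= v a implies b | a. *)
Definition is_dvr (R : idomainType) (v : R -> nat) : Prop :=
  [/\ (forall x y : R, x != 0 -> y != 0 -> v (x * y) = addn (v x) (v y)),
      (forall x y : R, x != 0 -> y != 0 -> x + y != 0 ->
         leq (minn (v x) (v y)) (v (x + y))),
      (forall x y : R, x != 0 -> y != 0 -> leq (v y) (v x) ->
         exists z : R, x = y * z)
    & exists p : R, p != 0 /\ v p = 1%N].

(* Extended rationals for slopes: None stands for -oo. *)
Definition ext_lt (a b : option rat) : bool :=
  match a, b with
  | None, Some _ => true
  | Some x, Some y => x < y
  | _, _ => false
  end.

(* m_i(f) = (v(a_n) - v(a_i)) / (n - i), with -oo when a_i = 0. *)
Definition slope (R : idomainType) (v : R -> nat) (f : {poly R}) (i : nat)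
  : option rat :=
  if f`_i == 0 then None
  else Some (((v (lead_coef f))%:R - (v f`_i)%:R) / ((size f).-1 - i)%N%:R).

(* Main.v *)
Require Import Defs.
From HB Require Import structures.
From mathcomp Require Import all_boot all_order all_algebra.
From mathcomp Require Import zify ring lra.
Import Order.TTheory GRing.Theory Num.Theory.
Local Open Scope ring_scope.

Lemma dvr_v1 (R : idomainType) (v : R -> nat) : is_dvr v -> v 1 = 0%N.
Proof.
case=> hm _ _ _; have := hm 1 1 (oner_neq0 _) (oner_neq0 _).
rewrite mulr1; lia.
Qed.
Arguments dvr_v1 {R v}.

Lemma dvr_vN (R : idomainType) (v : R -> nat) (x : R) : is_dvr v -> x != 0 -> v (- x) = v x.
Proof.
move=> hv hx; have h1 := dvr_v1 hv; case: hv => hm _ _ _.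
have hN1 : (-1 : R) != 0 by rewrite oppr_eq0 oner_neq0.
have := hm _ _ hN1 hN1; rewrite mulrNN mulr1 h1 => e.
rewrite -mulN1r hm //; lia.
Qed.
Arguments dvr_vN {R v x}.

Lemma dvr_dom {R : idomainType} {v : R -> nat} {I : Type} (r : seq I) (P : pred I)
  (F : I -> R) (x : R) : is_dvr v -> x != 0 ->
  (forall i, P i -> F i = 0 \/ ltn (v x) (v (F i))) ->
  x + \sum_(i <- r | P i) F i != 0 /\ leq (v (x + \sum_(i <- r | P i) F i)) (v x).
Proof.
move=> hv hx hF.
have hy : (\sum_(i <- r | P i) F i) = 0 \/ (\sum_(i <- r | P i) F i != 0 /\ ltn (v x) (v (\sum_(i <- r | P i) F i))).
  apply: (big_ind (fun y => y = 0 \/ (y != 0 /\ ltn (v x) (v y)))); first by left.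
    move=> a b [->|[ha0 ha]]; first by rewrite add0r.
    move=> [->|[hb0 hb]]; first by rewrite addr0; right.
    have [->|hab] := eqVneq (a + b) 0; first by left.
    right; split=> //; case: hv => _ hu _ _.
    move: (hu _ _ ha0 hb0 hab); apply: leq_trans; by rewrite leq_min; apply/andP; split.
  move=> i Pi; have [e|ne] := eqVneq (F i) 0; first by left.
  by case: (hF i Pi) => [e|h]; [left|right].
set y := \sum_(i <- r | P i) F i in hy *.
case: hy => [->|[hy0 hy]]; first by rewrite addr0 hx.
have hxy : x + y != 0.
  apply/eqP=> e; have ey : y = - x by apply/eqP; rewrite -subr_eq0 opprK addrC e.
  by move: hy; rewrite ey (dvr_vN hv hx) /ltn /= ltnn.
split=> //.
have hNy : - y != 0 by rewrite oppr_eq0.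
have := (match hv with And4 _ hu _ _ => hu end) _ _ hxy hNy.
rewrite addrK (dvr_vN hv hy0) => /(_ hx); move: hy; rewrite /ltn /=. lia.
Qed.
Definition Wt (R : idomainType) (v : R -> nat) (G E : int) (c : R) (j : nat) : int :=
  G * (v c)%:Z + E * j%:Z.
Arguments Wt {R} v G E c j.

Lemma seq_min (F : nat -> int) (s : seq nat) : s != [::] ->
  exists2 i, i \in s & forall j, j \in s -> F i <= F j.
Proof.
elim: s => // a s IH _; case: s IH => [|b s] IH.
  by exists a; [rewrite mem_seq1 | move=> j; rewrite mem_seq1 => /eqP->].
have [i iS Hi] := IH isT.
case: (lerP (F a) (F i)) => h.
  exists a; first by rewrite mem_head.
  move=> j; rewrite in_cons => /orP[/eqP->//|/Hi]; exact: le_trans.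
exists i; first by rewrite in_cons iS orbT.
move=> j; rewrite in_cons => /orP[/eqP->|/Hi//]; exact: ltW.
Qed.

Lemma poly_min (R : idomainType) (v : R -> nat) (G E : int) (p : {poly R}) :
  p != 0 -> exists i, [/\ p`_i != 0,
    (forall j, p`_j != 0 -> Wt v G E p`_i i <= Wt v G E p`_j j) &
    (forall j, (j < i)%N -> p`_j != 0 -> Wt v G E p`_i i < Wt v G E p`_j j)].
Proof.
move=> p0.
set S := [seq j <- iota 0 (size p) | p`_j != 0].
have memS j : (j \in S) = (p`_j != 0).
  rewrite mem_filter mem_iota add0n /=; apply/andP/idP => [[]//|h]; split=> //.
  by rewrite ltnNge; apply/negP => /leq_sizeP/(_ j (leqnn j))/eqP; rewrite (negbTE h).
have SN : S != [::].
  apply/eqP=> e; have := memS (size p).-1; rewrite e in_nil -lead_coefE.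
  by rewrite lead_coef_eq0 p0.
have [i0 iS Hi] := @seq_min (fun j => Wt v G E p`_j j) S SN.
pose m := Wt v G E p`_i0 i0.
have exP : exists k, (p`_k != 0) && (Wt v G E p`_k k == m).
  by exists i0; rewrite -memS iS eqxx.
case: (ex_minnP exP) => i /andP[pi /eqP Wi] imin.
exists i; split=> //.
  by move=> j /[dup] pj; rewrite -memS => /Hi; rewrite Wi.
move=> j ji pj; rewrite lt_neqAle Wi (Hi j) ?memS // andbT.
apply/negP => /eqP e.
have := imin j; rewrite pj -e eqxx => /(_ isT); rewrite leqNgt ji //.
Qed.

Lemma gauss_min (R : idomainType) (v : R -> nat) (G E : int) (p q : {poly R}) (i1 i2 : nat) :
  is_dvr v -> 0 < G -> p`_i1 != 0 -> q`_i2 != 0 ->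
  (forall j, p`_j != 0 -> Wt v G E p`_i1 i1 <= Wt v G E p`_j j) ->
  (forall j, (j < i1)%N -> p`_j != 0 -> Wt v G E p`_i1 i1 < Wt v G E p`_j j) ->
  (forall j, q`_j != 0 -> Wt v G E q`_i2 i2 <= Wt v G E q`_j j) ->
  (forall j, (j < i2)%N -> q`_j != 0 -> Wt v G E q`_i2 i2 < Wt v G E q`_j j) ->
  (p * q)`_(i1 + i2) != 0 /\
  Wt v G E (p * q)`_(i1 + i2) (i1 + i2) <= Wt v G E p`_i1 i1 + Wt v G E q`_i2 i2.
Proof.
move=> hv G0 p1 q2 Hp Hp' Hq Hq'.
have hm := match hv with And4 hm _ _ _ => hm end.
have hi : (i1 < (i1 + i2).+1)%N by lia.
rewrite coefM (bigD1 (Ordinal hi)) //= addKn.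
have x0 : p`_i1 * q`_i2 != 0 by rewrite mulf_neq0.
have [] := dvr_dom (index_enum _) (fun i : 'I_(i1 + i2).+1 => true && (i != Ordinal hi))
   (fun i : 'I_(i1 + i2).+1 => p`_i * q`_(i1 + i2 - i)) (p`_i1 * q`_i2) hv x0.
  move=> [j hj] /= /eqP hne.
  have hne' : j != i1 by apply/eqP=> e; apply: hne; apply: val_inj.
  have [pj|pj] := eqVneq p`_j 0; first by left; rewrite pj mul0r.
  have [qk|qk] := eqVneq q`_(i1 + i2 - j) 0; first by left; rewrite qk mulr0.
  right; rewrite !hm //.
  have key : Wt v G E p`_i1 i1 + Wt v G E q`_i2 i2 <
             Wt v G E p`_j j + Wt v G E q`_(i1 + i2 - j) (i1 + i2 - j).
    case: (ltngtP j i1) hne' => // hj1 _.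
      by apply: ltr_leD; [exact: Hp' | exact: Hq].
    by apply: ler_ltD; [exact: Hp | apply: Hq' => //; lia].
  move: key; rewrite /Wt.
  have -> : ((i1 + i2 - j)%N%:Z = (i1 + i2)%N%:Z - j%:Z) by rewrite subzn //; lia.
  move=> key.
  have : G * (addn (v p`_i1) (v q`_i2))%:Z < G * (addn (v p`_j) (v q`_(i1 + i2 - j)))%:Z.
    rewrite !PoszD !mulrDr; move: key; rewrite ?PoszD; lra.
  by rewrite ltr_pM2l // ltz_nat.
move=> c0 cle; split=> //.
move: cle; rewrite -lez_nat -(ler_pM2l G0) /Wt hm // PoszD !mulrDr; lra.
Qed.
Lemma natz_rat (k : nat) : ((k%:Z)%:~R : rat) = k%:R.
Proof. by []. Qed.

Lemma conv_lt (a b c x y : nat) : (0 < x)%N -> (0 < y)%N ->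
  ((a%:R - b%:R) / x%:R < (a%:R - c%:R) / y%:R :> rat) ->
  ((a%:Z - b%:Z) * y%:Z < (a%:Z - c%:Z) * x%:Z).
Proof.
move=> hx hy; rewrite ltr_pdivrMr ?ltr0n // mulrAC ltr_pdivlMr ?ltr0n // => h.
by rewrite -(ltr_int rat) !(rmorphB, rmorphM) /= !natz_rat.
Qed.

Lemma div_final (G : nat) (E : int) (a b m : nat) : (0 < G)%N ->
  G%:Z * a%:Z + E * 0%:Z = G%:Z * b%:Z + E * m%:Z -> (G %/ gcdn `|E| G %| m)%N.
Proof.
move=> G0 h.
have h2 : G%:Z * (a%:Z - b%:Z) = E * m%:Z by rewrite mulrBr; lra.
have h3 : (G * `|a%:Z - b%:Z| = `|E| * m)%N by have := congr1 absz h2; rewrite !abszM.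
have hd : (0 < gcdn `|E| G)%N by rewrite gcdn_gt0 G0 orbT.
rewrite dvdn_divLR // ?dvdn_gcdr // mulnC muln_gcdl dvdn_gcd; apply/andP; split.
  by rewrite -h3 dvdn_mulr.
by rewrite dvdn_mulr.
Qed.

Lemma lvl (d : nat) (l : int) : (0 < d)%N -> (d%:Z %| l)%Z -> 0 < l -> d%:Z <= l.
Proof.
move=> d0; rewrite dvdzE /= => hd l0.
rewrite -(gtz0_abs l0) lez_nat; apply: dvdn_leq => //.
by rewrite absz_gt0 gt_eqF.
Qed.
Lemma conv_eq (d n s vn vs v0 : nat) : (0 < s)%N -> (s < n)%N ->
  (d%:R : rat) = (n * (n - s))%N%:R * ((vn%:R - vs%:R) / (n - s)%N%:R - (vn%:R - v0%:R) / (n - 0)%N%:R) ->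
  d%:Z = (n - s)%N%:Z * (v0%:Z - vn%:Z) - (vs%:Z - vn%:Z) * n%:Z.
Proof.
move=> h0 h1; have hsn : (s <= n)%N by exact: ltnW.
rewrite subn0 natrM natrB // => h.
apply: (@intr_inj rat); rewrite !(rmorphB, rmorphM) /= !natz_rat natrB // h.
have hn : (n%:R : rat) != 0 by rewrite pnatr_eq0; lia.
have hns : (n%:R - s%:R : rat) != 0 by rewrite subr_eq0 eqr_nat; lia.
by field; rewrite hn hns.
Qed.

Arguments conv_lt {a b c x y}.
Arguments div_final {G E} a b m.
Arguments conv_eq {d n s vn vs v0}.
Arguments poly_min {R} v G E p.
Arguments gauss_min {R v G E p q i1 i2}.

Lemma Wt_mul (R : idomainType) (v : R -> nat) (G E : int) (x y : R) (j k : nat) :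
  is_dvr v -> x != 0 -> y != 0 ->
  Wt v G E (x * y) (j + k) = Wt v G E x j + Wt v G E y k.
Proof. by case=> hm _ _ _ hx hy; rewrite /Wt hm // !PoszD; ring. Qed.
Arguments Wt_mul {R v G E x y j k}.

Theorem theorem1 (R : idomainType) (v : R -> nat) (hv : is_dvr v)
  (f : {poly R}) (s : nat) :
  (2 <= (size f).-1)%N ->
  f`_0 * lead_coef f != 0 ->
  (s < (size f).-1)%N ->
  (forall i : nat, (i < (size f).-1)%N -> i != s ->
     ext_lt (slope v f i) (slope v f s)) ->
  (let n := (size f).-1 in
   let d := gcdn `|((v f`_s)%:Z - (v (lead_coef f))%:Z)%R|%N (n - s) in
   (if s != 0%N then
      match slope v f s, slope v f 0 with
      | Some ms, Some m0 => (d%:R : rat) = (n * (n - s))%N%:R * (ms - m0)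
      | _, _ => False end
    else d = 1%N) ->
   forall f1 f2 : {poly R}, f = f1 * f2 ->
     ((n - s) %/ d %| (size f1).-1)%N \/ ((n - s) %/ d %| (size f2).-1)%N).
Proof.
move=> hn h0 hs ha n d hb f1 f2 hf.
have an : lead_coef f != 0 by apply: contraNneq h0 => ->; rewrite mulr0.
have a0 : f`_0 != 0 by apply: contraNneq h0 => ->; rewrite mul0r.
have fn : f`_n = lead_coef f by rewrite lead_coefE.
have hsn : (s <= n)%N by exact: ltnW.
have as0 : f`_s != 0.
  apply/negP => /eqP e.
  have hi : ((if s == 0%N then 1 else 0) < n)%N by case: (s == 0%N); lia.
  have hne : (if s == 0%N then 1 else 0)%N != s.
    by case: (eqVneq s 0%N) => [->|ne] //=; rewrite eq_sym.
  have := ha _ hi hne; have -> : slope v f s = None by rewrite /slope e eqxx.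
  by case: (slope v f _).
set G : int := (n - s)%N%:Z.
set E : int := (v f`_s)%:Z - (v (lead_coef f))%:Z.
have G0 : 0 < G by rewrite /G ltz_nat subn_gt0.
set Wn := Wt v G E (lead_coef f) n.
have hWs : Wt v G E f`_s s = Wn.
  rewrite /Wn /Wt /G /E -(subzn hsn); ring.
have key : forall i, f`_i != 0 -> Wn <= Wt v G E f`_i i.
  move=> i fi; case: (ltngtP i n) => hi.
  - have [->|hne] := eqVneq i s; first by rewrite hWs.
    have hx : (0 < n - i)%N by rewrite subn_gt0.
    have hy : (0 < n - s)%N by rewrite subn_gt0.
    have := ha i hi hne; rewrite /slope (negbTE fi) (negbTE as0) /= => /(conv_lt hx hy) h.
    rewrite -(subzn (ltnW hi)) -(subzn hsn) in h.
    rewrite /Wn /Wt /G /E -(subzn hsn).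
    apply: ltW; lra.
  - have : (size f <= i)%N by move: hi; rewrite /n; lia.
    by move=> /(nth_default 0) e; rewrite e eqxx in fi.
  - by rewrite hi fn.
have hL0 : Wt v G E f`_0 0 - Wn <= d%:Z.
  case: (eqVneq s 0%N) hb => [s0 _| s0].
    by move: hWs; rewrite s0 => ->; rewrite subrr.
  rewrite ?s0 /= /slope (negbTE as0) (negbTE a0) /= => hb.
  have s0' : (0 < s)%N by rewrite lt0n.
  move: (conv_eq s0' hs hb) => ->.
  rewrite /Wn /Wt /G /E le_eqVlt; apply/orP; left; apply/eqP; ring.
have f10 : f1 != 0 by apply: contraNneq an => e; rewrite hf e mul0r lead_coef0.
have f20 : f2 != 0 by apply: contraNneq an => e; rewrite hf e mulr0 lead_coef0.
have [i1 [p1 Hp Hp']] := poly_min v G E f1 f10.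
have [i2 [q2 Hq Hq']] := poly_min v G E f2 f20.
have [c0 cle] := gauss_min hv G0 p1 q2 Hp Hp' Hq Hq'.
rewrite -hf in c0 cle.
have k1 := key _ c0.
set M1 := Wt v G E f1`_i1 i1 in Hp Hp' cle.
set M2 := Wt v G E f2`_i2 i2 in Hq Hq' cle.
have l1 : lead_coef f1 != 0 by rewrite lead_coef_eq0.
have l2 : lead_coef f2 != 0 by rewrite lead_coef_eq0.
have hlead : lead_coef f = lead_coef f1 * lead_coef f2 by rewrite hf lead_coefM.
have hnn : n = ((size f1).-1 + (size f2).-1)%N.
  rewrite /n hf size_mul //.
  move: (size_poly_gt0 f1) (size_poly_gt0 f2); rewrite f10 f20; lia.
have hWtop : Wn = Wt v G E (lead_coef f1) (size f1).-1 + Wt v G E (lead_coef f2) (size f2).-1.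
  by rewrite /Wn hlead hnn Wt_mul.
have t1 : M1 <= Wt v G E (lead_coef f1) (size f1).-1.
  by rewrite lead_coefE; apply: Hp; rewrite -lead_coefE.
have t2 : M2 <= Wt v G E (lead_coef f2) (size f2).-1.
  by rewrite lead_coefE; apply: Hq; rewrite -lead_coefE.
have e1 : Wt v G E (lead_coef f1) (size f1).-1 = M1 by lra.
have e2 : Wt v G E (lead_coef f2) (size f2).-1 = M2 by lra.
have hf0 : f`_0 = f1`_0 * f2`_0 by rewrite hf coef0M.
have c1 : f1`_0 != 0 by apply: contraNneq a0 => e; rewrite hf0 e mul0r.
have c2 : f2`_0 != 0 by apply: contraNneq a0 => e; rewrite hf0 e mulr0.
have hW0 := Wt_mul (G:=G) (E:=E) (j:=0%N) (k:=0%N) hv c1 c2.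
rewrite addn0 -hf0 in hW0.
have u1 := Hp 0%N c1.
have u2 := Hq 0%N c2.
have hd0 : (0 < d)%N by rewrite gcdn_gt0 subn_gt0 hs orbT.
have dG : (d%:Z %| G)%Z by rewrite dvdzE /= dvdn_gcdr.
have dE : (d%:Z %| E)%Z by rewrite dvdzE /= dvdn_gcdl.
have dW x j : (d%:Z %| Wt v G E x j)%Z by rewrite /Wt rpredD // dvdz_mulr.
have hG0 : (0 < n - s)%N by rewrite subn_gt0.
have fin1 : Wt v G E f1`_0 0 = Wt v G E (lead_coef f1) (size f1).-1 ->
    ((n - s) %/ d %| (size f1).-1)%N.
  exact: (div_final (v f1`_0) (v (lead_coef f1)) (size f1).-1 hG0).
have fin2 : Wt v G E f2`_0 0 = Wt v G E (lead_coef f2) (size f2).-1 ->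
    ((n - s) %/ d %| (size f2).-1)%N.
  exact: (div_final (v f2`_0) (v (lead_coef f2)) (size f2).-1 hG0).
have [z1|nz1] := eqVneq (Wt v G E f1`_0 0 - M1) 0.
  by left; apply: fin1; rewrite e1; apply/eqP; rewrite -subr_eq0 z1.
right; apply: fin2; rewrite e2.
have hl1 : d%:Z <= Wt v G E f1`_0 0 - M1.
  apply: lvl => //; first by rewrite rpredB // -e1.
  by rewrite lt_neqAle eq_sym nz1 subr_ge0.
lra.
Qed.
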